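(* Consider the compound Burgers-Korteweg-de Vries equation $$u_t + \alpha u u_x + \beta u^2 u_x + \mu u_{xx} + s u_{xxx} = 0,$$ with real constants $\alpha>0$, $\mu>0$, $s>0$ and $\beta<0$ (so $-s\beta>0$). Let $\varepsilon_1,\varepsilon_2,\varepsilon_3,\varepsilon\in\{1,-1\}$ satisfy the constraint $\varepsilon_1\varepsilon_2\varepsilon_3=1$, and set $$\kappa=\varepsilon_1\,\frac{\alpha}{2|\beta|}\sqrt{\frac{|\beta|}{6s}}-\varepsilon_2\,\frac{\mu}{6s}.$$ Define $$B_0=-\frac{\alpha}{2\beta}-\varepsilon_3\sqrt{\frac{6s}{|\beta|}}\,\frac{\mu}{6s},\qquad B_1=\varepsilon_3\sqrt{\frac{6s}{|\beta|}}\,\kappa,\qquad C_1=2\kappa,$$ $$D_1=i\,\varepsilon\left(\frac{\alpha}{2|\beta|}-\varepsilon_3\,\frac{\mu}{6s}\sqrt{\frac{6s}{|\beta|}}\right),\qquad v=-\frac{\mu^2}{6s}-2s\left[\frac{\alpha}{2|\beta|}\sqrt{\frac{|\beta|}{6s}}-\varepsilon_3\frac{\mu}{6s}\right]^2-\frac{\alpha^2}{4\beta}.$$ Then, for arbitrary $x_0$, $$u(x,t)=B_0+B_1\tanh\big[C_1(x-vt+x_0)\big]+D_1\,\mathrm{sech}\big[C_1(x-vt+x_0)\big]$$ is a (complex) traveling solitary wave solution of the equation, whose real part has a kink profile and whose imaginary part has a bell profile; moreover $B_1^2=-D_1^2$, so that $|B_1|=|D_1|$ (with $D_1$ purely ima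ginary).
   Context: Traveling waves $u(x,t)=u(\xi)$, $\xi=x-vt$, of the equation satisfy (after one integration with zero integration constant) $u''+ru'+au^3+bu^2+cu=0$ with $r=\mu/s$, $a=\beta/(3s)$, $b=\alpha/(2s)$, $c=-v/s$. The solution is sought via the hyperbolic ansatz $u=B_0+B_1\tanh[C_1(x-vt+x_0)]+D_1\,\mathrm{sech}[C_1(x-vt+x_0)]$, whose constants are obtained by substituting into the ODE, writing everything in exponentials $e^{kC_1\xi}$, and equating the coefficients of $e^{kC_1\xi}$, $k=0,\dots,6$, to zero (the only other solutions of that algebraic system have $B_1=D_1=0$, i.e. constant solutions). *)

(* Defs.v *)
From Stdlib Require Import Reals.
From Coquelicot Require Import Coquelicot.
Open Scope R_scope.

Definition sech (x : R) : R := / cosh x.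

Definition cBKdV_solution (al be mu s : R) (u : R -> R -> C) : Prop :=
  exists ut ux uxx uxxx : R -> R -> C,
    (forall x t, is_derive (fun t' => u x t') t (ut x t)) /\
    (forall x t, is_derive (fun x' => u x' t) x (ux x t)) /\
    (forall x t, is_derive (fun x' => ux x' t) x (uxx x t)) /\
    (forall x t, is_derive (fun x' => uxx x' t) x (uxxx x t)) /\
    (forall x t,
       (ut x t + RtoC al * u x t * ux x t + RtoC be * (u x t * u x t) * ux x t
        + RtoC mu * uxx x t + RtoC s * uxxx x t)%C = RtoC 0).

Definition kappa (al be mu s e1 e2 : R) : R :=
  e1 * (al / (2 * Rabs be)) * sqrt (Rabs be / (6 * s)) - e2 * (mu / (6 * s)).

Definition B0c (al be mu s e3 : R) : R :=
  - (al / (2 * be)) - e3 * sqrt (6 * s / Rabs be) * (mu / (6 * s)).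

Definition B1c (al be mu s e1 e2 e3 : R) : R :=
  e3 * sqrt (6 * s / Rabs be) * kappa al be mu s e1 e2.

Definition C1c (al be mu s e1 e2 : R) : R := 2 * kappa al be mu s e1 e2.

Definition D1c (al be mu s e3 e : R) : C :=
  (Ci * RtoC (e * (al / (2 * Rabs be) - e3 * (mu / (6 * s)) * sqrt (6 * s / Rabs be))))%C.

Definition vc (al be mu s e3 : R) : R :=
  - (mu ^ 2 / (6 * s))
  - 2 * s * (al / (2 * Rabs be) * sqrt (Rabs be / (6 * s)) - e3 * (mu / (6 * s))) ^ 2
  - al ^ 2 / (4 * be).

Definition u_sol (al be mu s e1 e2 e3 e x0 : R) (x t : R) : C :=
  let z := C1c al be mu s e1 e2 * (x - vc al be mu s e3 * t + x0) in
  (RtoC (B0c al be mu s e3 + B1c al be mu s e1 e2 e3 * tanh z)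
   + D1c al be mu s e3 e * RtoC (sech z))%C.

(* Main.v *)
Require Import Defs.
From Stdlib Require Import Reals Lra Psatz.
From Coquelicot Require Import Coquelicot.
Open Scope R_scope.

Lemma is_derive_pairC (f g : R -> R) (x a b : R) :
  is_derive f x a -> is_derive g x b ->
  @is_derive R_AbsRing C_R_NormedModule (fun y => (f y, g y) : C) x ((a, b) : C).
Proof.
intros Hf Hg.
unfold is_derive in *.
apply (filterdiff_ext_lin _ (fun y : R => (scal y a, scal y b))).
- apply (filterdiff_comp_2 f g (fun u v => (u, v)) (fun y => scal y a) (fun y => scal y b) (fun u v => (u,v)) Hf Hg).
  apply (filterdiff_ext_lin _ (fun t => t)).
  + apply filterdiff_ext with (fun t => t). intros [u v]; reflexivity.
    apply filterdiff_id.
  + intros [u v]; reflexivity.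
- intros y. reflexivity.
Qed.

Lemma exp_plus_inv_pos z : 0 < exp z + / exp z.
Proof. pose proof (exp_pos z). assert (0 < / exp z) by (apply Rinv_0_lt_compat; lra). lra. Qed.

Lemma dtanh z : is_derive tanh z (1 - tanh z ^ 2).
Proof.
  unfold tanh, sinh, cosh.
  auto_derive.
  - rewrite exp_Ropp. pose proof (exp_plus_inv_pos z). lra.
  - rewrite !exp_Ropp. pose proof (exp_plus_inv_pos z). pose proof (exp_pos z). field; split; nra.
Qed.

Lemma dsech z : is_derive sech z (- sech z * tanh z).
Proof.
  unfold sech, tanh, sinh, cosh.
  auto_derive.
  - rewrite exp_Ropp. pose proof (exp_plus_inv_pos z). lra.
  - rewrite !exp_Ropp. pose proof (exp_plus_inv_pos z). pose proof (exp_pos z). field; split; nra.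
Qed.

Lemma sech_tanh z : sech z ^ 2 = 1 - tanh z ^ 2.
Proof.
  unfold sech, tanh, sinh, cosh.
  rewrite !exp_Ropp. pose proof (exp_plus_inv_pos z). pose proof (exp_pos z). field; split; nra.
Qed.

Lemma ex_tanh z : ex_derive (fun y => tanh y) z. Proof. eexists; apply dtanh. Qed.
Lemma ex_sech z : ex_derive (fun y => sech y) z. Proof. eexists; apply dsech. Qed.
Lemma Dtanh z : Derive (fun y => tanh y) z = 1 - tanh z ^ 2. Proof. apply is_derive_unique, dtanh. Qed.
Lemma Dsech z : Derive (fun y => sech y) z = - sech z * tanh z. Proof. apply is_derive_unique, dsech. Qed.

Ltac exsolve := repeat split; first [apply ex_tanh | apply ex_sech].
Ltac dsolve := apply is_derive_pairC; auto_derive; try exsolve; rewrite ?Dtanh, ?Dsech; unfold Rminus; ring.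

Theorem mainTheorem1 (al be mu s : R) (e1 e2 e3 e x0 : R)
  (hal : 0 < al) (hmu : 0 < mu) (hs : 0 < s) (hbe : be < 0)
  (he1 : e1 = 1 \/ e1 = -1) (he2 : e2 = 1 \/ e2 = -1)
  (he3 : e3 = 1 \/ e3 = -1) (he : e = 1 \/ e = -1)
  (hprod : e1 * e2 * e3 = 1) :
  let B0 := B0c al be mu s e3 in
  let B1 := B1c al be mu s e1 e2 e3 in
  let C1 := C1c al be mu s e1 e2 in
  let D1 := D1c al be mu s e3 e in
  let v := vc al be mu s e3 in
  let u := u_sol al be mu s e1 e2 e3 e x0 in
  cBKdV_solution al be mu s u /\
  (forall x t, Re (u x t) = B0 + B1 * tanh (C1 * (x - v * t + x0))) /\
  (forall x t, Im (u x t) = Im D1 * sech (C1 * (x - v * t + x0))) /\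
  Re D1 = 0 /\
  (RtoC B1 * RtoC B1 = - (D1 * D1))%C /\
  Rabs B1 = Cmod D1.
Proof.
  intros B0 B1 C1 D1 v u.
  set (d := e * (al / (2 * Rabs be) - e3 * (mu / (6 * s)) * sqrt (6 * s / Rabs be))).
  assert (HD : D1 = (0, d)).
  { unfold D1, D1c, d, Ci, RtoC, Cmult; simpl. f_equal; ring. }
  assert (Hu : forall x t, u x t = (B0 + B1 * tanh (C1 * (x - v * t + x0)), d * sech (C1 * (x - v * t + x0)))).
  { intros x t. unfold u, u_sol. fold B0 B1 C1 v. fold D1. rewrite HD.
    unfold Cplus, Cmult, RtoC; simpl. f_equal; ring. }
  assert (Hbex : exists b, be = - b /\ 0 < b) by (exists (- be); split; lra).
  destruct Hbex as [b [Hbe hb]]. subst be.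
  assert (Hb : Rabs (- b) = b) by (rewrite Rabs_Ropp; apply Rabs_pos_eq; lra).
  set (q := sqrt (6 * s / b)).
  set (r := sqrt (b / (6 * s))).
  assert (hq2 : q * q = 6 * s / b).
  { unfold q. apply sqrt_sqrt. apply Rlt_le, Rdiv_lt_0_compat; lra. }
  assert (hqr : q * r = 1).
  { unfold q, r. rewrite <- sqrt_mult. replace (6 * s / b * (b / (6 * s))) with 1 by (field; lra).
    apply sqrt_1. apply Rlt_le, Rdiv_lt_0_compat; lra.
    apply Rlt_le, Rdiv_lt_0_compat; lra. }
  assert (hq : 0 < q).
  { unfold q. apply sqrt_lt_R0. apply Rdiv_lt_0_compat; lra. }
  assert (hr : r = / q) by (apply (Rmult_eq_reg_l q); [rewrite hqr; field|]; lra).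
  set (m := al / (2 * b) - e3 * q * (mu / (6 * s))).
  assert (HB0 : B0 = m).
  { unfold B0, B0c, m. rewrite Hb. fold q. field. lra. }
  assert (HB1 : B1 = e2 * m).
  { unfold B1, B1c, kappa, m. rewrite Hb. fold q r.
    rewrite hr. destruct he1, he2, he3; subst; try lra; field; lra. }
  assert (HC1 : C1 = 2 * e1 * m / q).
  { unfold C1, C1c, kappa, m. rewrite Hb. fold r. rewrite hr.
    destruct he1, he2, he3; subst; try lra; field; lra. }
  assert (Hd : d = e * m).
  { unfold d, m. rewrite Hb. fold q. ring. }
  assert (Hv : v = - (mu ^ 2 / (6 * s)) - 2 * s * (m / q) ^ 2 + al ^ 2 / (4 * b)).
  { unfold v, vc, m. rewrite Hb. fold r. rewrite hr. field. lra. }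
  assert (Hs : s = q * q * b / 6).
  { rewrite hq2. field. lra. }
  assert (Hm : m = al / (2 * b) - e3 * q * (mu / (6 * s))) by reflexivity.
  clearbody q r m.
  split; [| split; [| split; [| split; [| split]]]].
  - exists (fun x t => (- v * C1 * (B1 * (1 - tanh (C1 * (x - v * t + x0)) ^ 2)),
                        - v * C1 * (- d * sech (C1 * (x - v * t + x0)) * tanh (C1 * (x - v * t + x0)))) : C).
    exists (fun x t => (C1 * (B1 * (1 - tanh (C1 * (x - v * t + x0)) ^ 2)),
                        C1 * (- d * sech (C1 * (x - v * t + x0)) * tanh (C1 * (x - v * t + x0)))) : C).
    exists (fun x t => (C1^2 * (-2 * B1 * tanh (C1 * (x - v * t + x0)) * (1 - tanh (C1 * (x - v * t + x0)) ^ 2)),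
                        C1^2 * (d * sech (C1 * (x - v * t + x0)) * (2 * tanh (C1 * (x - v * t + x0)) ^ 2 - 1))) : C).
    exists (fun x t => (C1^3 * (-2 * B1 * (1 - tanh (C1 * (x - v * t + x0)) ^ 2) * (1 - 3 * tanh (C1 * (x - v * t + x0)) ^ 2)),
                        C1^3 * (d * sech (C1 * (x - v * t + x0)) * tanh (C1 * (x - v * t + x0)) * (5 - 6 * tanh (C1 * (x - v * t + x0)) ^ 2))) : C).
    split; [| split; [| split; [| split]]].
    + intros x t. eapply is_derive_ext. { intros t'. symmetry. apply Hu. } dsolve.
    + intros x t. eapply is_derive_ext. { intros t'. symmetry. apply Hu. } dsolve.
    + intros x t. dsolve.
    + intros x t. dsolve.
    + intros x t. rewrite Hu.
      assert (HS := sech_tanh (C1 * (x - v * t + x0))).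
      generalize dependent (tanh (C1 * (x - v * t + x0))).
      generalize dependent (sech (C1 * (x - v * t + x0))).
      intros S T HS.
      rewrite HB0, HB1, HC1, Hd, Hv.
      unfold Cplus, Cmult, RtoC; simpl.
      rewrite Hm. rewrite Hs.
      assert (HS3 : S ^ 3 = S * (1 - T ^ 2)) by (rewrite <- HS; ring).
      destruct he1, he2, he3, he; subst; try lra;
      f_equal; field_simplify; try lra; rewrite ?HS3, ?HS; field; lra.
  - intros x t. rewrite Hu. reflexivity.
  - intros x t. rewrite Hu, HD. reflexivity.
  - rewrite HD. reflexivity.
  - rewrite HB1, HD, Hd. unfold Cmult, Copp, RtoC; simpl.
    destruct he2, he; subst; f_equal; ring.
  - rewrite HB1, HD, Hd. unfold Cmod; simpl.
    replace (0 * (0 * 1) + e * m * (e * m * 1)) with (Rsqr (e2 * m)).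
    + rewrite sqrt_Rsqr_abs. reflexivity.
    + unfold Rsqr. destruct he2, he; subst; ring.
Qed.
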